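(* Let $T$ be a reduced linear trellis of length $n$. For each span $\mathfrak{s}$ choose a subset $\mathcal{B}_{\mathfrak{s}}\subseteq\mathbb{S}_{\mathfrak{s}}(T)$ whose image in the quotient $\mathbb{S}_{\mathfrak{s}}(T)/\mathbb{S}_{<\mathfrak{s}}(T)$ is a basis of that quotient (with distinct elements mapping to distinct basis elements). Then $\mathcal{B}:=\bigsqcup_{\mathfrak{s}}\mathcal{B}_{\mathfrak{s}}$ (union over all spans) is a basis of $\mathbb{S}(T)$, and for every span $\mathfrak{s}$ the set $\mathcal{B}\cap\mathbb{S}_{\mathfrak{s}}(T)$ spans $\mathbb{S}_{\mathfrak{s}}(T)$. In particular every reduced linear trellis has a product basis.
   Context: Let $\mathbb{F}$ be a finite field with $q$ elements and $n\ge1$; indices are taken in $\mathbb{Z}_n$. A trellis $T$ of length $n$ over $\mathbb{F}$ consists of pairwise disjoint finite vertex sets $V_i(T)$, $i\in\mathbb{Z}_n$, and edge sets $E_i(T)\subseteq V_i(T)\times\mathbb{F}\times V_{i+1}(T)$; $(v,\alpha,w)\in E_i(T)$ is an edge from $v$ to $w$ with label $\alpha$ at time index $i$. Every trellis is assumed trim: each vertex has at least one outgoing and one incoming edge. $T$ is linear if every $V_i(T)$ is an $\mathbb{F}$-vector space and every $E_i(T)$ is a subspace of $V_i(T)\times\mathbb{F}\times V_{i+1}(T)$. A path of length $m$ is a sequence $v_0\alpha_0v_1\alpha_1\cdots\alpha_{m-1}v_m$ such that each $(v_j,\alpha_j,v_{j+1})$ is an edge. A cycle is a path of length $n$ starting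 in $V_0(T)$ with $v_n=v_0$; it is identified with $(\mathbf{v},\boldsymbol{\alpha})\in\prod_{i\in\mathbb{Z}_n}V_i(T)\times\mathbb{F}^n$. The label code $\mathbb{S}(T)$ is the set of cycles (a linear subspace if $T$ is linear). $T$ is reduced if every edge lies on some cycle. Spans. For $a\in\mathbb{Z}_n$ and $0\le l\le n-1$ put $[a,a+l]=\{a,a+1,\dots,a+l\}\subseteq\mathbb{Z}_n$ and $(a,a+l]=[a,a+l]\setminus\{a\}$. Such a pair $(a,l)$ is a span of length $l$; there are also two degenerate spans, $\emptyset$ (length $-1$) and $\mathbb{Z}_n$ (length $n$). Partial order: $(a_1,l_1)\le(a_2,l_2)$ iff ($l_1\le l_2<n-1$ and $[a_1,a_1+l_1]\subseteq[a_2,a_2+l_2]$) or ($l_2=n-1$ and $(a_1,a_1+l_1]\subseteq(a_2,a_2+l_2]$) or $l_1=-1$ or $l_2=n$. A nondegenerate span $(a,l)$ is a span of the cycle $(\mathbf{v},\boldsymbol{\alpha})$ if $\{i:v_i\neq0\}\subseteq(a,a+l]$ and $\{i:\alpha_i\ne0\}\subseteq[a,a+l]$; $\emptyset$ is a span only of the zero cycle and $\mathbb{Z}_n$ is a span of every cycle. The span subcode $\mathbb{S}_{\mathfrak{s}}(T)$ is the subspace of cycles having span $\mathfrak{s}$, and $\mathbb{S}_{<\mathfrak{s}}(T):=\sum_{\mathfrak{s}'\lneq\mathfrak{s}}\mathbb{S}_{\mathfrak{s}'}(T)$. A product basis of $T$ is a basis $\mathcal{B}$ of $\mathbb{S}(T)$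 such that $\mathcal{B}\cap\mathbb{S}_{\mathfrak{s}}(T)$ spans $\mathbb{S}_{\mathfrak{s}}(T)$ for every span $\mathfrak{s}$. *)

(* Defs.v *)
From HB Require Import structures.
From mathcomp Require Import all_boot all_order all_algebra.
Set Implicit Arguments. Unset Strict Implicit. Unset Printing Implicit Defensive.
Import GRing.Theory.
Local Open Scope ring_scope.

(* Time indices Z_n are represented by 'I_n; i+1 is the cyclic successor
   [ordS i].  The vertex space V_i(T) of a linear trellis is a finite
   F-vector space, represented (up to isomorphism) as 'rV[F]_(vdim i).
   The edge set E_i(T) is given by its membership predicate on
   V_i x F x V_{i+1}. *)
Record trellis (F : finFieldType) (n : nat) := Trellis {
  vdim : 'I_n -> nat;
  edge : forall i : 'I_n, 'rV[F]_(vdim i) -> F -> 'rV[F]_(vdim (ordS i)) -> bool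
}.
Arguments vdim {F n} t i : rename.
Arguments edge {F n} t i _ _ _ : rename.

Section Trellis.
Variables (F : finFieldType) (n : nat) (T : trellis F n).

Definition linear_trellis : Prop :=
  forall i : 'I_n,
    edge T i 0 0 0 /\
    forall (c : F) v a w v' a' w',
      edge T i v a w -> edge T i v' a' w' ->
      edge T i (c *: v + v') (c * a + a') (c *: w + w').

Definition trim_trellis : Prop :=
  (forall (i : 'I_n) (v : 'rV[F]_(vdim T i)), exists a w, edge T i v a w) /\
  (forall (i : 'I_n) (w : 'rV[F]_(vdim T (ordS i))), exists v a, edge T i v a w).

(* Coordinates of the ambient space  prod_i V_i(T) x F^n. *)
Definition coord := ({i : 'I_n & 'I_(vdim T i)} + 'I_n)%type.

Definition ambient := {ffun coord -> F^o}.

Definition state (x : ambient) (i : 'I_n) : 'rV[F]_(vdim T i) :=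
  \row_j x (inl (Tagged (fun k => 'I_(vdim T k)) j)).

Definition label (x : ambient) (i : 'I_n) : F := x (inr i).

Definition is_cycle (x : ambient) : bool :=
  [forall i : 'I_n, edge T i (state x i) (label x i) (state x (ordS i))].

Definition reduced_trellis : Prop :=
  forall (i : 'I_n) v a w, edge T i v a w ->
    exists x, [/\ is_cycle x, state x i = v, label x i = a & state x (ordS i) = w].

End Trellis.

(* Spans: the empty span (length -1), the full span Z_n (length n), and
   nondegenerate spans (a, l) with a in Z_n and 0 <= l <= n-1. *)
Inductive tspan (n : nat) :=
| SEmpty
| SFull
| SInt of 'I_n & 'I_n.

Definition span_code n (s : tspan n) : option (option ('I_n * 'I_n)) :=
  match s with
  | SEmpty => None
  | SFull => Some None
  | SInt a l => Some (Some (a, l))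
  end.
Definition span_decode n (c : option (option ('I_n * 'I_n))) : tspan n :=
  match c with
  | None => SEmpty n
  | Some None => SFull n
  | Some (Some (a, l)) => SInt a l
  end.
Lemma span_codeK n : cancel (@span_code n) (@span_decode n).
Proof. by case. Qed.
HB.instance Definition _ n := Finite.copy (tspan n) (can_type (@span_codeK n)).

Section Spans.
Variable n : nat.

(* i \in [a, a+l]  (in Z_n) *)
Definition in_cint (a l i : 'I_n) : bool := ((i + n - a) %% n <= l)%N.
(* i \in (a, a+l]  (in Z_n) *)
Definition in_hoint (a l i : 'I_n) : bool := (0 < (i + n - a) %% n <= l)%N.

Definition span_le (s1 s2 : tspan n) : bool :=
  match s1, s2 with
  | SEmpty, _ => true
  | _, SFull => true
  | SInt a1 l1, SInt a2 l2 =>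
      ([&& (l1 <= l2)%N, (l2 < n.-1)%N &
           [forall i : 'I_n, in_cint a1 l1 i ==> in_cint a2 l2 i]])
      || ((l2 == n.-1 :> nat) &&
           [forall i : 'I_n, in_hoint a1 l1 i ==> in_hoint a2 l2 i])
  | _, _ => false
  end.

Definition span_lt (s1 s2 : tspan n) : bool := span_le s1 s2 && (s1 != s2).
End Spans.

Section SpanCodes.
Variables (F : finFieldType) (n : nat) (T : trellis F n).

Definition has_span (s : tspan n) (x : ambient T) : bool :=
  match s with
  | SEmpty => x == 0
  | SFull => true
  | SInt a l =>
      [forall i : 'I_n, (state x i != 0) ==> in_hoint a l i] &&
      [forall i : 'I_n, (label x i != 0) ==> in_cint a l i]
  end.

Definition cycle_code : {vspace ambient T} :=
  <<[seq x <- enum (ambient T) | is_cycle x]>>%VS.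

Definition span_subcode (s : tspan n) : {vspace ambient T} :=
  <<[seq x <- enum (ambient T) | is_cycle x && has_span s x]>>%VS.

Definition span_subcode_lt (s : tspan n) : {vspace ambient T} :=
  (\sum_(s' : tspan n | span_lt s' s) span_subcode s')%VS.
End SpanCodes.

(* The family X (a sequence, so with multiplicities) of vectors of U maps
   injectively onto a basis of the quotient U / L (L a subspace of U):
   the classes span U / L and are linearly independent in U / L. *)
Definition quotient_basis (F : fieldType) (vT : vectType F)
    (U L : {vspace vT}) (X : seq vT) : Prop :=
  [/\ all (fun x => x \in U) X,
      (U <= <<X>> + L)%VS &
      forall c : 'I_(size X) -> F,
        (\sum_(j < size X) c j *: X`_j \in L) -> forall j, c j = 0].

(* Main.v *)
Require Import Defs.
From HB Require Import structures.
From mathcomp Require Import all_boot all_order all_algebra zify.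
Set Implicit Arguments. Unset Strict Implicit. Unset Printing Implicit Defensive.
Import GRing.Theory.
Local Open Scope ring_scope.

Section Rel.
Variable n : nat.
Definition off (b i : 'I_n) : nat := ((i + n - b) %% n)%N.

Lemma relE (b i : 'I_n) : off b i = if (b <= i)%N then (i - b)%N else (i + n - b)%N.
Proof.
rewrite /off; have hb := ltn_ord b; have hi := ltn_ord i.
case: leqP => h.
  have -> : (i + n - b = (i - b) + n)%N by lia.
  by rewrite modnDr modn_small //; lia.
by rewrite modn_small //; lia.
Qed.

Lemma rel_lt b i : (off b i < n)%N.
Proof. rewrite relE; have := ltn_ord b; have := ltn_ord i; case: (leqP b i); lia. Qed.

Lemma rel_self b : off b b = 0%N.
Proof. by rewrite relE leqnn subnn. Qed.

Lemma rel_inj b i j : off b i = off b j -> i = j.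
Proof.
rewrite !relE => h; apply: val_inj => /=; move: h.
have := ltn_ord b; have := ltn_ord i; have := ltn_ord j.
case: (leqP b i) => h1; case: (leqP b j) => h2; lia.
Qed.

Lemma rel_eq0 b i : off b i = 0%N -> i = b.
Proof. by rewrite -(rel_self b); apply: rel_inj. Qed.

Lemma ordS_val (i : 'I_n) : (val (ordS i) = if i.+1 == n then 0 else i.+1)%N.
Proof.
rewrite /=; have := ltn_ord i; case: eqP => [->|h] hi; first by rewrite modnn.
by rewrite modn_small //; lia.
Qed.

Lemma rel_ordS b i : off b (ordS i) = if off b i == n.-1 then 0%N else (off b i).+1.
Proof.
rewrite !relE ordS_val.
have := ltn_ord b; have := ltn_ord i.
case: (i.+1 =P n) => h1; case: (leqP b i) => h2; try case: (leqP b 0) => h3;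
  try case: (leqP b i.+1) => h4; case: eqP => h5; lia.
Qed.

Lemma rel_trans b a i : (off b a <= off b i)%N -> off a i = (off b i - off b a)%N.
Proof.
rewrite !relE.
have := ltn_ord b; have := ltn_ord i; have := ltn_ord a.
case: (leqP b a) => h1; case: (leqP b i) => h2; case: (leqP a i) => h3; lia.
Qed.
End Rel.

Section Basic.
Variables (F : finFieldType) (n : nat) (T : trellis F n).
Implicit Types x y : ambient T.

Lemma stateD x y i : state (x + y) i = state x i + state y i.
Proof. by apply/rowP => j; rewrite !mxE ffunE. Qed.
Lemma stateZ (c : F) x i : state (c *: x) i = c *: state x i.
Proof. by apply/rowP => j; rewrite !mxE ffunE. Qed.
Lemma state0 i : state (0 : ambient T) i = 0.
Proof. by apply/rowP => j; rewrite !mxE ffunE. Qed.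
Lemma stateN x i : state (- x) i = - state x i.
Proof. by apply/rowP => j; rewrite !mxE ffunE. Qed.
Lemma stateB x y i : state (x - y) i = state x i - state y i.
Proof. by rewrite stateD stateN. Qed.
Lemma state_sum (I : Type) (r : seq I) (P : pred I) (f : I -> ambient T) i :
  state (\sum_(t <- r | P t) f t) i = \sum_(t <- r | P t) state (f t) i.
Proof. exact: (big_morph (fun x => state x i) (fun x y => stateD x y i) (state0 i)). Qed.

Lemma labelD x y i : label (x + y) i = label x i + label y i.
Proof. by rewrite /label ffunE. Qed.
Lemma labelZ (c : F) x i : label (c *: x) i = c * label x i.
Proof. by rewrite /label ffunE. Qed.
Lemma label0 i : label (0 : ambient T) i = 0.
Proof. by rewrite /label ffunE. Qed.
Lemma labelN x i : label (- x) i = - label x i.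
Proof. by rewrite /label ffunE. Qed.
Lemma labelB x y i : label (x - y) i = label x i - label y i.
Proof. by rewrite labelD labelN. Qed.
Lemma label_sum (I : Type) (r : seq I) (P : pred I) (f : I -> ambient T) i :
  label (\sum_(t <- r | P t) f t) i = \sum_(t <- r | P t) label (f t) i.
Proof. exact: (big_morph (fun x => label x i) (fun x y => labelD x y i) (label0 i)). Qed.

Lemma ambient_eq0 x : (forall i, state x i = 0) -> (forall i, label x i = 0) -> x = 0.
Proof.
move=> hs hl; apply/ffunP => -[[i j]|i]; rewrite ffunE.
  by have := congr1 (fun m : 'rV[F]_(vdim T i) => m 0 j) (hs i); rewrite !mxE.
exact: hl.
Qed.

Hypothesis Hlin : linear_trellis T.

Lemma edge0 i : edge T i 0 0 0.
Proof. by case: (Hlin i). Qed.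
Lemma edgeD i v a w v' a' w' : edge T i v a w -> edge T i v' a' w' ->
  edge T i (v + v') (a + a') (w + w').
Proof. by case: (Hlin i) => _ h /(h 1) H /H; rewrite !scale1r mul1r. Qed.
Lemma edgeZ i c v a w : edge T i v a w -> edge T i (c *: v) (c * a) (c *: w).
Proof. by case: (Hlin i) => h0 h /(h c) H; have := H _ _ _ h0; rewrite !addr0. Qed.
Lemma edge_sum (I : Type) (r : seq I) (P : pred I) i v a w :
  (forall t, P t -> edge T i (v t) (a t) (w t)) ->
  edge T i (\sum_(t <- r | P t) v t) (\sum_(t <- r | P t) a t) (\sum_(t <- r | P t) w t).
Proof.
move=> h; elim/big_rec3: _ => [|t x y z Pt e]; first exact: edge0.
by apply: edgeD => //; apply: h.
Qed.

Lemma cycle0 : is_cycle (0 : ambient T).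
Proof. by apply/forallP => i; rewrite !state0 label0; apply: edge0. Qed.
Lemma cycleD x y : is_cycle x -> is_cycle y -> is_cycle (x + y).
Proof.
move=> /forallP hx /forallP hy; apply/forallP => i.
by rewrite !stateD labelD; apply: edgeD.
Qed.
Lemma cycleZ c x : is_cycle x -> is_cycle (c *: x).
Proof. by move=> /forallP hx; apply/forallP => i; rewrite !stateZ labelZ; apply: edgeZ. Qed.

Lemma span0 s : has_span s (0 : ambient T).
Proof.
case: s => [||a l] //=.
by apply/andP; split; apply/forallP => i; rewrite ?state0 ?label0 eqxx.
Qed.
Lemma spanD s x y : has_span s x -> has_span s y -> has_span s (x + y).
Proof.
case: s => //= [/eqP-> /eqP->|a l]; first by rewrite addr0.
move=> /andP[/forallP hx1 /forallP hx2] /andP[/forallP hy1 /forallP hy2].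
apply/andP; split; apply/forallP => i; apply/implyP => nz; apply/negPn/negP => h.
  move: (hx1 i) (hy1 i); rewrite (negbTE h) !implybF !negbK => /eqP e /eqP e'.
  by move: nz; rewrite stateD e e' addr0 eqxx.
move: (hx2 i) (hy2 i); rewrite (negbTE h) !implybF !negbK => /eqP e /eqP e'.
by move: nz; rewrite labelD e e' addr0 eqxx.
Qed.
Lemma spanZ s c x : has_span s x -> has_span s (c *: x).
Proof.
case: s => //= [/eqP->|a l]; first by rewrite scaler0.
move=> /andP[/forallP hx1 /forallP hx2].
apply/andP; split; apply/forallP => i; apply/implyP => nz; apply/negPn/negP => h.
  move: (hx1 i); rewrite (negbTE h) !implybF !negbK => /eqP e.
  by move: nz; rewrite stateZ e scaler0 eqxx.
move: (hx2 i); rewrite (negbTE h) !implybF !negbK => /eqP e.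
by move: nz; rewrite labelZ e mulr0 eqxx.
Qed.

Lemma mem_subcode s x : (x \in span_subcode T s) = is_cycle x && has_span s x.
Proof.
apply/idP/idP; last first.
  by move=> h; apply: memv_span; rewrite mem_filter h mem_enum.
rewrite /span_subcode /cycle_code; set X := [seq _ <- _ | _] => hx.
rewrite (coord_span (X := in_tuple X) hx).
apply: (big_ind (fun x => is_cycle x && has_span s x)).
- by rewrite cycle0 span0.
- by move=> u v /andP[? ?] /andP[? ?]; rewrite cycleD ?spanD.
move=> j _; have : X`_j \in X by by apply: mem_nth.
by rewrite mem_filter => /andP[/andP[? ?] _]; rewrite cycleZ ?spanZ.
Qed.

Lemma mem_code x : (x \in cycle_code T) = is_cycle x.
Proof.
apply/idP/idP; last first.
  by move=> h; apply: memv_span; rewrite mem_filter h mem_enum.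
rewrite /span_subcode /cycle_code; set X := [seq _ <- _ | _] => hx.
rewrite (coord_span (X := in_tuple X) hx).
apply: (big_ind (fun x => is_cycle x)); first exact: cycle0.
- by move=> u v ? ?; rewrite cycleD.
move=> j _; have : X`_j \in X by by apply: mem_nth.
by rewrite mem_filter => /andP[? _]; rewrite cycleZ.
Qed.

End Basic.

Section Order.
Variable n : nat.

Definition len (s : tspan n) : nat :=
  match s with SEmpty => 0 | SFull => n.+1 | SInt _ l => l.+1 end.

Lemma rel_surj (b : 'I_n) k : (k < n)%N -> exists j, off b j = k.
Proof.
move=> hk; have hb := ltn_ord b.
have hj : ((if b + k < n then b + k else b + k - n) < n)%N by case: ifP; lia.
exists (Ordinal hj); rewrite relE /=.
case: (ltnP (b + k) n) => h1; case: leqP => h2; lia.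
Qed.

Lemma rel_pred (b i : 'I_n) : (0 < off b i)%N -> off b (ord_pred i) = (off b i).-1.
Proof.
move=> h; have := rel_ordS b (ord_pred i); rewrite ord_predK.
have := rel_lt b (ord_pred i); case: eqP => e; lia.
Qed.

Lemma span_mono (s t : tspan n) (F : finFieldType) (T : trellis F n) (x : ambient T) :
  span_le t s -> has_span t x -> has_span s x.
Proof.
case: t => [| |a1 l1] /=.
- by move=> _ /eqP ->; apply: span0.
- by case: s.
case: s => [| |a2 l2] //= hle /andP[/forallP hs /forallP hl].
case/orP: hle => [/and3P[h12 h2 /forallP hc]|/andP[/eqP h2 /forallP hc]].
  apply/andP; split; apply/forallP => i; apply/implyP => nz.
    have /andP[p1 p2] : (0 < off a1 i)%N && (off a1 i <= l1)%N := implyP (hs i) nz.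
    have ci : in_cint a1 l1 i := p2.
    have h4 : (off a2 i <= l2)%N := implyP (hc i) ci.
    apply/andP; split; last exact: h4.
    rewrite lt0n; apply/eqP => /rel_eq0 ei; subst a2.
    have hp : (off a1 (ord_pred i) <= l1)%N by rewrite rel_pred //; lia.
    have h3 : (off i (ord_pred i) <= l2)%N := implyP (hc _) hp.
    have := rel_ordS i (ord_pred i); rewrite ord_predK rel_self.
    case: eqP => // e _; lia.
  exact: (implyP (hc i) (implyP (hl i) nz)).
apply/andP; split; apply/forallP => i; apply/implyP => nz.
  exact: (implyP (hc i) (implyP (hs i) nz)).
by rewrite /in_cint h2; have := rel_lt a2 i; rewrite /off; lia.
Qed.

Lemma span_lt_len (s t : tspan n) : span_lt t s -> (len t < len s)%N.
Proof.
rewrite /span_lt; case: t => [| |a1 l1]; case: s => [| |a2 l2] //=;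
  rewrite ?eqxx ?andbF //.
- by move=> _; have := ltn_ord l1; lia.
case/andP => hle hne; have h1 := ltn_ord l1; have h2 := ltn_ord l2.
have [lt|gt|e] := ltngtP l1 l2; first lia.
  by move: hle; case/orP => [/and3P[]|/andP[/eqP]]; lia.
have el : l1 = l2 by apply: val_inj.
move: hne; rewrite el; case: (a1 =P a2) => [->|na]; first by rewrite eqxx.
move=> _; exfalso; case/orP: hle => [/and3P[_ hl /forallP hc]|/andP[/eqP hl /forallP hc]].
  have [j hj] := rel_surj a1 h1.
  have H1 := implyP (hc a1); rewrite /in_cint -/(off a1 a1) rel_self in H1.
  have {}H1 : (off a2 a1 <= l2)%N by apply: H1.
  have H2 : (off a2 j <= l2)%N by apply: (implyP (hc j)); rewrite /in_cint -/(off a1 j) hj.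
  have H5 : off a2 (ord_pred a2) = n.-1.
    have := rel_ordS a2 (ord_pred a2); rewrite ord_predK rel_self; case: eqP => //.
  have H4 : ~~ (off a1 (ord_pred a2) <= l1)%N.
    by apply/negP => h; have := implyP (hc (ord_pred a2)) h; rewrite /in_cint -/(off a2 _) H5; lia.
  move: (ord_pred a2) H4 H5 => p H4 H5.
  move: H1 H2 H4 H5 hl na hj; rewrite !relE /= => H1 H2 H4 H5 hl na hj.
  have := ltn_ord a1; have := ltn_ord a2; have := ltn_ord j; have := ltn_ord p.
  move: H1 H2 H4 H5 hj; rewrite -el.
  case: (leqP a2 a1); case: (leqP a2 j); case: (leqP a1 p); case: (leqP a2 p);
    case: (leqP a1 j) => *; apply: na; apply: ord_inj; lia.
have := implyP (hc a2); rewrite /in_hoint -/(off a1 a2) -/(off a2 a2) rel_self ltnn /=.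
have hlt := rel_lt a1 a2; have h0 : off a1 a2 <> 0%N.
  by move/rel_eq0 => e'; apply: na.
move=> H; suff : false by []. apply: H; apply/andP; split; lia.
Qed.

End Order.

Lemma offS n (a i : 'I_n) : (1 < n)%N ->
  off (ordS a) i = if off a i == 0%N then n.-1 else (off a i).-1.
Proof.
move=> hn; case: eqP => e.
  have -> := rel_eq0 e.
  have := rel_ordS (ordS a) a; rewrite rel_self; case: eqP => //.
have h1 : off a (ordS a) = 1%N.
  by rewrite rel_ordS rel_self; case: eqP => //; lia.
have h2 : (off a (ordS a) <= off a i)%N by rewrite h1; lia.
by rewrite (rel_trans h2) h1 subn1.
Qed.

Lemma lt1 n (a l lp : 'I_n) : (lp : nat) = l.-1 -> (0 < l)%N -> span_lt (SInt a lp) (SInt a l).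
Proof.
move=> hlp hl; rewrite /span_lt /=; apply/andP; split; last first.
  by apply/negP => /eqP [] /(congr1 (@nat_of_ord n)); rewrite /= hlp; lia.
have := ltn_ord l; case: (ltnP l n.-1) => h hln.
  apply/orP; left; apply/and3P; split; [lia| done |].
  by apply/forallP => i; apply/implyP; rewrite /in_cint -!/(off a i); lia.
apply/orP; right; apply/andP; split; first by apply/eqP; lia.
by apply/forallP => i; apply/implyP; rewrite /in_hoint -!/(off a i); lia.
Qed.

Lemma lt2 n (a l lp : 'I_n) : (lp : nat) = l.-1 -> (0 < l)%N ->
  span_lt (SInt (ordS a) lp) (SInt a l).
Proof.
move=> hlp hl; rewrite /span_lt /=; apply/andP; split; last first.
  by apply/negP => /eqP [] _ /(congr1 (@nat_of_ord n)); rewrite /= hlp; lia.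
have := ltn_ord l; move=> hln; have hn : (1 < n)%N by lia.
case: (ltnP l n.-1) => h.
  apply/orP; left; apply/and3P; split; [lia| done |].
  apply/forallP => i; apply/implyP; rewrite /in_cint -!/(off a i) -!/(off (ordS a) i).
  by rewrite offS //; case: eqP; lia.
apply/orP; right; apply/andP; split; first by apply/eqP; lia.
apply/forallP => i; apply/implyP; rewrite /in_hoint -!/(off a i) -!/(off (ordS a) i).
have := rel_lt a i; rewrite offS //; case: eqP; lia.
Qed.

Section Core.
Variables (F : finFieldType) (n : nat) (T : trellis F n).
Hypothesis Hlin : linear_trellis T.

Definition restr (b : 'I_n) (c : nat) (z : ambient T) : ambient T :=
  [ffun co => match co with
   | inl p => if (c < off b (tag p))%N then z co else 0
   | inr i => if (c <= off b i)%N then z co else 0 end].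

Lemma state_restr b c z i :
  state (restr b c z) i = if (c < off b i)%N then state z i else 0.
Proof. by apply/rowP => j; rewrite !mxE ffunE /=; case: ifP; rewrite ?mxE. Qed.

Lemma label_restr b c z i :
  label (restr b c z) i = if (c <= off b i)%N then label z i else 0.
Proof. by rewrite /label ffunE. Qed.

Variable a : 'I_n.

Definition G (t : tspan n) : bool :=
  if t is SInt b m then in_cint b m a else false.
Definition kap (t : tspan n) (i : 'I_n) : bool :=
  if t is SInt b m then in_cint b m a && (off b a <= off b i)%N else false.
Definition RR (t : tspan n) (z : ambient T) : ambient T :=
  if t is SInt b m then (if in_cint b m a then restr b (off b a) z else 0) else 0.

Lemma RR_state t z i : i != a ->
  state (RR t z) i = if kap t i then state z i else 0.
Proof.
move=> na; case: t => [| |b m] /=; rewrite ?state0 //.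
case: ifP => hc /=; last by rewrite state0.
rewrite state_restr; have : off b i <> off b a by move/rel_inj => e; rewrite e eqxx in na.
move=> H; rewrite ltn_neqAle; have -> : off b a != off b i by apply/eqP => e; apply: H.
by [].
Qed.

Lemma RR_state_a t z :
  state (RR t z) a = (if kap t a then state z a else 0) - (if G t then state z a else 0).
Proof.
case: t => [| |b m] /=; rewrite ?state0 ?subr0 //.
case: ifP => hc /=; last by rewrite state0 subr0.
by rewrite state_restr ltnn leqnn subrr.
Qed.

Lemma RR_label t z i :
  label (RR t z) i = if kap t i then label z i else 0.
Proof.
case: t => [| |b m] /=; rewrite ?label0 //.
by case: ifP => hc /=; rewrite ?label0 // label_restr.
Qed.

Lemma RR_stateS t z i : has_span t z ->
  state (RR t z) (ordS i) = if kap t i then state z (ordS i) else 0.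
Proof.
case: t => [| |b m] /=; rewrite ?state0 //.
move=> /andP[/forallP hs _]; case: ifP => hc /=; last by rewrite state0.
rewrite state_restr rel_ordS.
have hl := rel_lt b i.
case: eqP => e.
  have hb : ordS i = b by apply: rel_eq0; rewrite rel_ordS e eqxx.
  have : state z (ordS i) == 0.
    by move: (hs (ordS i)); rewrite hb /in_hoint -/(off b b) rel_self ltnn implybF negbK.
  by move/eqP ->; rewrite !if_same.
by rewrite ltnS.
Qed.

Lemma kap_a t : kap t a = G t.
Proof. by case: t => // b m /=; rewrite leqnn andbT. Qed.

Lemma mem_lt t s u : span_lt t s -> u \in span_subcode T t -> u \in span_subcode_lt T s.
Proof. by move=> h; apply: (subvP (sumv_sup t h (subvv _))). Qed.

Lemma core (l : 'I_n) (P : pred (tspan n)) x :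
  (forall t, P t -> (t != SInt a l) && (len t <= l.+1)%N) ->
  x \in span_subcode T (SInt a l) ->
  x \in (\sum_(t | P t) span_subcode T t)%VS ->
  x \in span_subcode_lt T (SInt a l).
Proof.
move=> HP; rewrite mem_subcode // => /andP[cx hx] /memv_sumP[xs hxs ex].
have hxs' t : P t -> is_cycle (xs t) && has_span t (xs t).
  by move=> Pt; rewrite -mem_subcode //; apply: hxs.
case/andP: (hx) => /forallP hxs1 /forallP hxl1.
have hln := ltn_ord l.
have hsub b m : P (SInt b m) -> in_cint b m a ->
    (m <= l)%N && ((0 < off b a)%N || (m < l)%N).
  move=> Pt hc; have /andP[hne hle] := HP _ Pt; rewrite /= in hle.
  apply/andP; split; first lia.
  case: (off b a =P 0%N) => [/rel_eq0 e|]; last by move=> h; apply/orP; left; lia.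
  subst b; apply/orP; right; have hml : (m <= l)%N by lia.
  rewrite ltn_neqAle hml andbT; apply/negP => /eqP e.
  by move: hne; rewrite (ord_inj e) eqxx.
have zeroG t : P t -> ~~ G t ->
    [/\ state (xs t) a = 0, label (xs t) a = 0 & state (xs t) (ordS a) = 0].
  move=> Pt; have /andP[ct st] := hxs' t Pt; have /andP[_ hle] := HP t Pt.
  case: t Pt ct st hle => [| |b m] Pt ct st hle /=.
  - by move/eqP: st => ->; rewrite state0 label0 state0.
  - by move: hle => /=; lia.
  move=> hc; case/andP: st => /forallP hs /forallP hl.
  split; apply/eqP/negP => /negP nz.
  - have := implyP (hs a) nz; rewrite /in_hoint /in_cint in hc *.
    by move=> /andP[_ h]; rewrite h in hc.
  - by have := implyP (hl a) nz; rewrite (negbTE hc).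
  - have /andP[h1 h2] : (0 < off b (ordS a))%N && (off b (ordS a) <= m)%N := implyP (hs _) nz.
    move: h1 h2; rewrite rel_ordS; case: eqP => // _ _ h.
    by move: hc; rewrite /in_cint -/(off b a); lia.
have sa : \sum_(t | P t) state (xs t) a = 0.
  rewrite -state_sum -ex; apply/eqP/negP => /negP nz.
  by have := implyP (hxs1 a) nz; rewrite /in_hoint -/(off a a) rel_self.
set y := \sum_(t | P t) RR t (xs t).
have cy : is_cycle y.
  apply/forallP => i; rewrite /y !state_sum label_sum.
  rewrite (eq_bigr (fun t => if kap t i then state (xs t) (ordS i) else 0)); last first.
    by move=> t Pt; rewrite RR_stateS //; case/andP: (hxs' t Pt).
  rewrite (eq_bigr (fun t => if kap t i then label (xs t) i else 0)); last first.
    by move=> t Pt; rewrite RR_label.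
  have -> : \sum_(t | P t) state (RR t (xs t)) i =
            \sum_(t | P t) (if kap t i then state (xs t) i else 0).
    case: (i =P a) => [->|/eqP na]; last by apply: eq_bigr => t _; rewrite RR_state.
    rewrite (eq_bigr (fun t => (if kap t a then state (xs t) a else 0) -
                               (if G t then state (xs t) a else 0))); last first.
      by move=> t _; rewrite RR_state_a.
    rewrite sumrB.
    have -> : \sum_(t | P t) (if G t then state (xs t) a else 0) = 0.
      apply: etrans sa; apply: eq_bigr => t Pt; case: ifP => // /negbT nG.
      by case: (zeroG t Pt nG).
    by rewrite subr0.
  apply: edge_sum => // t Pt; case: (kap t i); last exact: edge0.
  by case/andP: (hxs' t Pt) => /forallP + _; apply.
have termS t i : P t -> ~~ ((0 < off a i)%N && (off a i < l)%N) -> state (RR t (xs t)) i = 0.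
  move=> Pt hn; case: t Pt => [| |b m] Pt /=; rewrite ?state0 //.
  case: ifP => hc; last by rewrite state0.
  rewrite state_restr; case: ifP => hj //; apply/eqP; apply/negP => /negP nz.
  have /andP[_ st] := hxs' _ Pt; case/andP: st => /forallP hs _.
  have /andP[h1 h2] : (0 < off b i)%N && (off b i <= m)%N := implyP (hs i) nz.
  have := hsub b m Pt hc; move: hn; rewrite (rel_trans (ltnW hj)).
  have := rel_lt b a; lia.
have termL t i : P t -> ~~ (off a i < l)%N -> label (RR t (xs t)) i = 0.
  move=> Pt hn; case: t Pt => [| |b m] Pt /=; rewrite ?label0 //.
  case: ifP => hc; last by rewrite label0.
  rewrite label_restr; case: ifP => hj //; apply/eqP; apply/negP => /negP nz.
  have /andP[_ st] := hxs' _ Pt; case/andP: st => _ /forallP hl.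
  have h2 : (off b i <= m)%N := implyP (hl i) nz.
  have := hsub b m Pt hc; move: hn; rewrite (rel_trans hj).
  have := rel_lt b a; have := rel_lt b i; lia.
have ys i : state y i != 0 -> (0 < off a i)%N && (off a i < l)%N.
  move=> nz; apply/negPn/negP => h; move: nz.
  by rewrite /y state_sum big1 ?eqxx // => t Pt; apply: termS.
have yl i : label y i != 0 -> (off a i < l)%N.
  move=> nz; apply/negPn/negP => h; move: nz.
  by rewrite /y label_sum big1 ?eqxx // => t Pt; apply: termL.
have lya : label y a = label x a.
  rewrite /y ex !label_sum; apply: eq_bigr => t Pt; rewrite RR_label kap_a.
  by case: ifP => // /negbT nG; case: (zeroG t Pt nG).
have sya : state y (ordS a) = state x (ordS a).
  rewrite /y ex !state_sum; apply: eq_bigr => t Pt.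
  rewrite RR_stateS ?kap_a; last by case/andP: (hxs' t Pt).
  by case: ifP => // /negbT nG; case: (zeroG t Pt nG).
case: (posnP l) => [l0|lpos].
  have y0 : y = 0.
    apply: ambient_eq0 => i; apply/eqP/negP => /negP nz.
      by have := ys i nz; rewrite l0 ltn0 andbF.
    by have := yl i nz; rewrite l0 ltn0.
  have -> : x = 0; last exact: mem0v.
  apply: ambient_eq0 => i; apply/eqP/negP => /negP nz.
    have := implyP (hxs1 i) nz; rewrite /in_hoint -/(off a i) l0; lia.
  have := implyP (hxl1 i) nz; rewrite /in_cint -/(off a i) l0 leqn0 => /eqP /rel_eq0 e.
  by move: nz; rewrite e -lya y0 label0 eqxx.
have hn : (1 < n)%N by lia.
have hlp : (l.-1 < n)%N by lia.
set lp := Ordinal hlp.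
have elp : (lp : nat) = l.-1 by [].
clearbody lp.
set z := x - y.
have -> : x = y + z by rewrite /z addrC subrK.
apply: memvD.
  apply: (mem_lt (lt1 a elp lpos)).
  rewrite mem_subcode // cy /=; apply/andP; split; apply/forallP => i; apply/implyP => nz.
    by have := ys i nz; rewrite /in_hoint -/(off a i) /=; lia.
  by have := yl i nz; rewrite /in_cint -/(off a i) /=; lia.
apply: (mem_lt (lt2 a elp lpos)).
rewrite mem_subcode //.
have -> : is_cycle z.
  by rewrite /z -scaleN1r cycleD ?cycleZ.
have h1 : off a (ordS a) = 1%N.
  by rewrite rel_ordS rel_self; case: eqP => //; lia.
rewrite andTb /=; apply/andP; split; apply/forallP => i; apply/implyP => nz; rewrite /=.
  rewrite /in_hoint -/(off (ordS a) i) offS //.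
  have hne : i != ordS a.
    by apply: contraNneq nz => ->; rewrite /z stateB sya subrr.
  have hx1 : (0 < off a i)%N && (off a i <= l)%N.
    move: nz; rewrite /z stateB; case: (state x i =P 0) => [e|/eqP nzx].
      rewrite e sub0r oppr_eq0 => /ys; lia.
    by move=> _; exact: (implyP (hxs1 i) nzx).
  have : off a i <> 1%N by rewrite -h1 => /rel_inj e; rewrite e eqxx in hne.
  case: eqP; lia.
rewrite /in_cint -/(off (ordS a) i) offS //.
have hne : i != a.
  by apply: contraNneq nz => ->; rewrite /z labelB lya subrr.
have hx1 : (off a i <= l)%N.
  move: nz; rewrite /z labelB; case: (label x i =P 0) => [e|/eqP nzx].
    rewrite e sub0r oppr_eq0 => /yl; lia.
  by move=> _; exact: (implyP (hxl1 i) nzx).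
have : off a i <> 0%N by move/rel_eq0 => e; rewrite e eqxx in hne.
case: eqP; lia.
Qed.

End Core.

Section Main.
Variables (F : finFieldType) (n : nat) (T : trellis F n).
Hypothesis Hlin : linear_trellis T.
Notation S := (span_subcode T).
Notation SL := (span_subcode_lt T).

Lemma claim_all s (P : pred (tspan n)) x :
  (forall t, P t -> (t != s) && (len t <= len s)%N) ->
  x \in S s -> x \in (\sum_(t | P t) S t)%VS -> x \in SL s.
Proof.
case: s => [| |a l] HP.
- by rewrite mem_subcode // => /andP[_ /eqP ->] _; exact: mem0v.
- suff h : ((\sum_(t | P t) S t) <= SL (SFull n))%VS by move=> _ /(subvP h).
  apply/subv_sumP => t Pt.
  apply: (sumv_sup t) => //; rewrite /span_lt.
  by case/andP: (HP t Pt) => -> _; case: t {Pt} => //.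
- exact: core.
Qed.

Lemma qb_zero U L (X : seq (ambient T)) z :
  quotient_basis U L X -> z \in <<X>>%VS -> z \in L -> z = 0.
Proof.
case=> _ _ hind hz hzL.
have e : z = \sum_(j < size X) coord (in_tuple X) j z *: X`_j := coord_span (X := in_tuple X) hz.
rewrite e in hzL *; apply: big1 => j _.
by rewrite (hind (fun j => coord (in_tuple X) j z) hzL) scale0r.
Qed.

Lemma qb_free U L (X : seq (ambient T)) : quotient_basis U L X -> free X.
Proof.
case=> _ _ hind; change (free (in_tuple X)); apply/freeP => k hk.
by apply: hind; rewrite /= hk mem0v.
Qed.

Variable B : tspan n -> seq (ambient T).
Hypothesis HB : forall s, quotient_basis (S s) (SL s) (B s).

Lemma B_sub s v : v \in B s -> v \in S s.
Proof. by case: (HB s) => /allP h _ _; apply: h. Qed.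

Definition rlen := fun s t : tspan n => (len t <= len s)%N.

Lemma free_list (L : seq (tspan n)) :
  uniq L -> sorted rlen L -> free (flatten (map B L)).
Proof.
elim: L => [|s L IH] /=; first by rewrite nil_free.
move=> /andP[sL uL] so.
have tr : transitive rlen by move=> x y z; rewrite /rlen => h1 h2; apply: leq_trans h2 h1.
have := so; rewrite path_sortedE // => /andP[/allP hall soL].
rewrite cat_free (qb_free (HB s)) IH //=.
apply/directv_addP/eqP; rewrite -subv0; apply/subvP => z /memv_capP[hz1 hz2].
rewrite memv0; apply/eqP; apply: (qb_zero (HB s) hz1).
apply: (claim_all (P := fun t => t \in L)).
- move=> t tL; rewrite (hall t tL : (len t <= len s)%N) andbT; apply: contraNneq sL => <-; exact: tL.
- by move: hz1; apply: subvP; apply/span_subvP => v; apply: B_sub.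
move: hz2; apply: subvP; apply/span_subvP => v /flattenP[w /mapP[t tL ->] vB].
by apply: (subvP (sumv_sup t tL (subvv _))); apply: B_sub.
Qed.

Definition BB := flatten [seq B s | s <- enum {: tspan n}].

Lemma BB_free : free BB.
Proof.
have hp : perm_eq (sort rlen (enum {: tspan n})) (enum {: tspan n}).
  by rewrite perm_sort perm_refl.
rewrite /BB -(perm_free (perm_flatten (perm_map B hp))).
apply: free_list; first by rewrite sort_uniq enum_uniq.
by apply: sort_sorted => x y; rewrite /rlen leq_total.
Qed.

Lemma BB_span s : (S s <= <<[seq b <- BB | b \in S s]>>)%VS.
Proof.
move: {2}(len s).+1 (ltnSn (len s)) => k; elim: k s => // k IH s hk.
case: (HB s) => _ hsp _; apply: subv_trans hsp _; rewrite subv_add; apply/andP; split.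
  apply: sub_span => v vB; rewrite mem_filter B_sub //=.
  by apply/flattenP; exists (B s) => //; apply: map_f; rewrite mem_enum.
apply/subv_sumP => t ht; apply: subv_trans (IH t _) _.
  by have := span_lt_len ht; lia.
apply: sub_span => v; rewrite !mem_filter => /andP[vt ->]; rewrite andbT.
move: vt; rewrite !mem_subcode // => /andP[-> /=]; apply: span_mono.
by case/andP: ht.
Qed.

Lemma part1 : basis_of (cycle_code T) BB /\
  forall s, (<<[seq b <- BB | b \in S s]>> = S s)%VS.
Proof.
have hs s : (<<[seq b <- BB | b \in S s]>> = S s)%VS.
  apply/eqP; rewrite eqEsubv BB_span andbT; apply/span_subvP => v.
  by rewrite mem_filter => /andP[].
split => //; rewrite /basis_of BB_free andbT.
have -> : cycle_code T = S (SFull n).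
  by apply/vspaceP => v; rewrite mem_code // mem_subcode //= andbT.
rewrite -(hs (SFull n)); apply/eqP; congr span; apply/esym/all_filterP/allP => v.
move=> /flattenP[w /mapP[t _ ->] vB]; have := B_sub vB.
by rewrite !mem_subcode // => /andP[-> _].
Qed.

End Main.

Lemma qb_exists (K : fieldType) (vT : vectType K) (U L : {vspace vT}) :
  quotient_basis U L (vbasis (U :\: L)).
Proof.
set D := (U :\: L)%VS.
split.
- apply/allP => v hv; apply: (subvP (diffvSl U L)); exact: basis_mem (vbasisP D) hv.
- by rewrite (span_basis (vbasisP D)) -{1}(addv_diff_cap U L) addvS // capvSr.
- move=> c hc.
  have hf : free (in_tuple (tval (vbasis D))) := basis_free (vbasisP D).
  move/freeP: hf => hf; apply: hf.
  apply/eqP; rewrite -memv0 -(capv_diff U L) memv_cap hc andbT.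
  apply: rpred_sum => j _; apply: rpredZ.
  apply: (basis_mem (vbasisP D)); apply: mem_nth; exact: ltn_ord.
Qed.

Unset Implicit Arguments.

Theorem mainTheorem2 (F : finFieldType) (n : nat) (T : trellis F n)
  (Hn : (0 < n)%N)
  (Hlin : linear_trellis T) (Htrim : trim_trellis T) (Hred : reduced_trellis T) :
  (forall B : tspan n -> seq (ambient T),
    (forall s : tspan n,
       quotient_basis (span_subcode T s) (span_subcode_lt T s) (B s)) ->
    let BB := flatten [seq B s | s <- enum {: tspan n}] in
    basis_of (cycle_code T) BB /\
    forall s : tspan n,
      (<<[seq b <- BB | b \in span_subcode T s]>> = span_subcode T s)%VS)
  /\
  (exists X : seq (ambient T),
    basis_of (cycle_code T) X /\
    forall s : tspan n,
      (<<[seq b <- X | b \in span_subcode T s]>> = span_subcode T s)%VS).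
Proof.
have P1 : forall B : tspan n -> seq (ambient T),
    (forall s : tspan n,
       quotient_basis (span_subcode T s) (span_subcode_lt T s) (B s)) ->
    let BB := flatten [seq B s | s <- enum {: tspan n}] in
    basis_of (cycle_code T) BB /\
    forall s : tspan n,
      (<<[seq b <- BB | b \in span_subcode T s]>> = span_subcode T s)%VS.
  by move=> B HB; exact: (part1 Hlin HB).
split => //.
pose B s := (vbasis (span_subcode T s :\: span_subcode_lt T s) : seq _).
exists (flatten [seq B s | s <- enum {: tspan n}]).
by apply: (P1 B) => s; apply: qb_exists.
Qed.
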